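(* Let $g:\mathbb{R}^N\to\mathbb{R}\cup\{+\infty\}$ be proper and lower semi-continuous, and let $f:\mathbb{R}^N\to\mathbb{R}$ be continuously differentiable such that, for some $\mathbf{L}\in\mathbb{S}_{++}(N)$, the gradient of $f\circ\mathbf{L}^{-1/2}$ is $1$-Lipschitz continuous; assume $f+g$ is bounded from below. Suppose $f(x)=\frac12\langle x,\mathbf{H}x\rangle+\langle b,x\rangle+c$ with $\mathbf{H}\in\mathbb{S}_{++}(N)$, $b\in\mathbb{R}^N$, $c\in\mathbb{R}$. Let $x_k\in\mathbb{R}^N$, $d\in\mathbb{R}^N\setminus\{0\}$, and for $\beta\in\mathbb{R}$ put $y^{(\beta)}:=x_k+\beta d$. Let $\mathbf{T}\in\mathbb{S}_{++}(N)$ be such that $\mathbf{M}:=\mathbf{T}-\mathbf{H}\in\mathbb{S}_{++}(N)$, and consider $$\min_{x\in\mathbb{R}^N}\min_{\beta\in\mathbb{R}}\ \ell(x;y^{(\beta)})+\tfrac12\|x-y^{(\beta)}\|_{\mathbf{T}}^2,\qquad \ell(x;y):=g(x)+f(y)+\langle\nabla f(y),x-y\rangle.\quad(\ast)$$ Then, for each fixed $x$, the inner minimization over $\beta$ is solved by $$\beta^*=\frac{\langle d,x-x_k\rangle_{\mathbf{M}}}{\langle d,d\rangle_{\mathbf{M}}},$$ and problem $(\ast)$ is equivalent to $$x_{k+1}\in\operatorname*{argmin}_{x\in\mathbb{R}^N}\ g(x)+\tfrac12\big\|x-x_k+\mathbf{Q}^{-1}\nabla f(x_k)\big\|_{\mathbf{Q}}^2,$$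 where $$\mathbf{Q}:=\mathbf{T}-uu^\top,\quad u:=\frac{\mathbf{M}d}{\|d\|_{\mathbf{M}}},\quad \mathbf{Q}^{-1}=\mathbf{T}^{-1}+\frac{\mathbf{T}^{-1}uu^\top\mathbf{T}^{-1}}{1-u^\top\mathbf{T}^{-1}u}.$$
   Context: $\mathbb{S}_{++}(N)$ denotes the set of symmetric positive definite $N\times N$ real matrices. For a matrix $\mathbf{V}$, $\|x\|_{\mathbf{V}}^2:=\langle x,\mathbf{V}x\rangle$ and $\langle x,y\rangle_{\mathbf{V}}:=\langle x,\mathbf{V}y\rangle$, with $\langle\cdot,\cdot\rangle$ the standard Euclidean inner product. ''Equivalent'' means the $x$-components of minimizers of $(\ast)$ are exactly the minimizers of the stated problem. *)

(* Defs.v *)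
From HB Require Import structures.
From mathcomp Require Import all_boot all_order all_algebra.
From mathcomp Require Import reals constructive_ereal.
Set Implicit Arguments. Unset Strict Implicit. Unset Printing Implicit Defensive.
Import Order.TTheory GRing.Theory Num.Theory.
Local Open Scope ring_scope.

Section Defs.
Variables (R : realType) (N : nat).

Definition ip (x y : 'cV[R]_N) : R := (x^T *m y) ord0 ord0.
Definition norm2 (x : 'cV[R]_N) : R := Num.sqrt (ip x x).
Definition ipV (V : 'M[R]_N) (x y : 'cV[R]_N) : R := ip x (V *m y).
Definition sqnormV (V : 'M[R]_N) (x : 'cV[R]_N) : R := ipV V x x.
Definition normV (V : 'M[R]_N) (x : 'cV[R]_N) : R := Num.sqrt (sqnormV V x).

Definition spd (A : 'M[R]_N) : Prop :=
  A^T = A /\ forall x : 'cV[R]_N, x != 0 -> 0 < ip x (A *m x).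

Definition is_gradient (F : 'cV[R]_N -> R) (x v : 'cV[R]_N) : Prop :=
  forall e : R, 0 < e -> exists2 dl : R, 0 < dl &
    forall h : 'cV[R]_N, 0 < norm2 h < dl ->
      `|F (x + h) - F x - ip v h| <= e * norm2 h.

Definition vcontinuous (G : 'cV[R]_N -> 'cV[R]_N) : Prop :=
  forall x (e : R), 0 < e -> exists2 dl : R, 0 < dl &
    forall y, norm2 (y - x) < dl -> norm2 (G y - G x) < e.

Definition lsc (g : 'cV[R]_N -> \bar R) : Prop :=
  forall x (a : R), (a%:E < g x)%E -> exists2 dl : R, 0 < dl &
    forall y, norm2 (y - x) < dl -> (a%:E < g y)%E.

Definition proper_fun (g : 'cV[R]_N -> \bar R) : Prop :=
  (forall x, g x != -oo%E) /\ exists x, g x != +oo%E.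
End Defs.

(* Main.v *)
Require Import Defs.
From HB Require Import structures.
From mathcomp Require Import all_boot all_order all_algebra.
From mathcomp Require Import reals constructive_ereal.
From mathcomp Require Import ring lra.
Import Order.TTheory GRing.Theory Num.Theory.
Local Open Scope ring_scope.

Section Aux.
Variables (R : realType) (N : nat).
Implicit Types (x y z : 'cV[R]_N) (A : 'M[R]_N).

Lemma ipDl x y z : ip (x + y) z = ip x z + ip y z.
Proof. by rewrite /ip linearD /= mulmxDl mxE. Qed.
Lemma ipDr x y z : ip x (y + z) = ip x y + ip x z.
Proof. by rewrite /ip mulmxDr mxE. Qed.
Lemma ipZl a x y : ip (a *: x) y = a * ip x y.
Proof. by rewrite /ip linearZ /= -scalemxAl mxE. Qed.
Lemma ipZr a x y : ip x (a *: y) = a * ip x y.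
Proof. by rewrite /ip -scalemxAr mxE. Qed.
Lemma ipNl x y : ip (- x) y = - ip x y.
Proof. by rewrite -scaleN1r ipZl mulN1r. Qed.
Lemma ipNr x y : ip x (- y) = - ip x y.
Proof. by rewrite -scaleN1r ipZr mulN1r. Qed.
Lemma ipBl x y z : ip (x - y) z = ip x z - ip y z.
Proof. by rewrite ipDl ipNl. Qed.
Lemma ipBr x y z : ip x (y - z) = ip x y - ip x z.
Proof. by rewrite ipDr ipNr. Qed.
Lemma ipMr A x y : ip x (A *m y) = ip (A^T *m x) y.
Proof. by rewrite /ip trmx_mul trmxK mulmxA. Qed.
Lemma ip0r x : ip x 0 = 0.
Proof. by rewrite /ip mulmx0 mxE. Qed.
Lemma ip0l x : ip 0 x = 0.
Proof. by rewrite /ip linear0 mul0mx mxE. Qed.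

Lemma ipE x y : ip x y = \sum_i x i ord0 * y i ord0.
Proof. by rewrite /ip mxE; apply: eq_bigr => i _; rewrite mxE. Qed.

Lemma ipC x y : ip x y = ip y x.
Proof. by rewrite !ipE; apply: eq_bigr => i _; rewrite mulrC. Qed.

Lemma ip_ge0 x : 0 <= ip x x.
Proof. by rewrite ipE sumr_ge0 // => i _; rewrite -expr2 sqr_ge0. Qed.

Lemma ip_gt0 x : x != 0 -> 0 < ip x x.
Proof.
move=> nz; rewrite lt_neqAle ip_ge0 andbT eq_sym; apply: contra nz.
rewrite ipE => /eqP/psumr_eq0P H0; apply/eqP/matrixP => i j.
rewrite (ord1 j) !mxE; apply/eqP; rewrite -sqrf_eq0 expr2 H0 //.
by move=> k _; rewrite -expr2 sqr_ge0.
Qed.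

Lemma norm2Z t x : 0 <= t -> norm2 (t *: x) = t * norm2 x.
Proof.
move=> t0; rewrite /norm2 ipZl ipZr mulrA -expr2 sqrtrM ?sqr_ge0 //.
by rewrite sqrtr_sqr ger0_norm.
Qed.

Lemma pd_unit A : (forall z, z != 0 -> 0 < ip z (A *m z)) -> A \in unitmx.
Proof.
move=> pd; rewrite unitmxE unitfE; apply/negP => /det0P [v vnz vA].
have : v^T != 0 by apply: contra vnz => /eqP h; rewrite -[v]trmxK h linear0.
move/pd; rewrite ipMr -trmx_mul vA linear0 ip0l ltxx //.
Qed.

Lemma quad_expand A b c (f : 'cV[R]_N -> R) :
  A^T = A -> (forall x, f x = 2^-1 * ip x (A *m x) + ip b x + c) ->
  forall y h, f (y + h) = f y + ip (A *m y + b) h + 2^-1 * ip h (A *m h).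
Proof.
move=> As fE y h; rewrite !fE mulmxDr !ipDl !ipDr.
have -> : ip y (A *m h) = ip (A *m y) h by rewrite ipMr As.
have -> : ip h (A *m y) = ip (A *m y) h by rewrite ipC.
by field.
Qed.

Lemma quadM A e d t : A^T = A ->
  ip (e - t *: d) (A *m (e - t *: d)) =
  ip e (A *m e) - 2 * t * ip d (A *m e) + t ^+ 2 * ip d (A *m d).
Proof.
move=> As; rewrite mulmxBr -scalemxAr !ipBl !ipBr !ipZl !ipZr.
have -> : ip e (A *m d) = ip d (A *m e) by rewrite ipMr As ipC.
by field.
Qed.

Lemma grad_quad A b c (f : 'cV[R]_N -> R) :
  A^T = A -> (forall h, 0 <= ip h (A *m h)) ->
  (forall x, f x = 2^-1 * ip x (A *m x) + ip b x + c) ->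
  forall y v, is_gradient f y v -> v = A *m y + b.
Proof.
move=> As Apsd fE y v gv; suff: A *m y + b - v == 0 by rewrite subr_eq0 => /eqP.
apply/negP => /negP wnz.
set w := A *m y + b - v in wnz.
have q0 := ip_gt0 _ wnz; set q := ip w w in q0.
set s := Num.sqrt q.
have s0 : 0 < s by rewrite sqrtr_gt0.
have sq : s ^+ 2 = q by rewrite sqr_sqrtr // ltW.
have [dl dl0 hdl] := gv (s / 2) ltac:(by rewrite divr_gt0).
set t := dl / (2 * s).
have t0 : 0 < t by rewrite divr_gt0 // mulr_gt0.
have nh : norm2 (t *: w) = dl / 2.
  rewrite norm2Z ?ltW // /norm2 -/q -/s /t; by field; rewrite gt_eqF.
have := hdl (t *: w); rewrite nh.
have -> : (0 < dl / 2 < dl) = true by apply/andP; split; lra.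
move=> /(_ isT).
rewrite (quad_expand _ _ _ _ As fE) -scalemxAr !ipZr !ipZl.
set p := ip w (A *m w).
have p0 : 0 <= p := Apsd w.
have -> : f y + t * ip (A *m y + b) w + 2^-1 * (t * (t * p)) - f y - t * ip v w
  = t * q + 2^-1 * (t * (t * p)).
  rewrite /q /w ipBl; ring.
rewrite ger0_norm; last first.
  have : 0 <= t * (t * p) by apply: mulr_ge0; [exact: ltW | apply: mulr_ge0 => //; exact: ltW].
  have : 0 < t * q by rewrite mulr_gt0.
  lra.
have e : dl = t * (2 * s) by rewrite /t; field; rewrite gt_eqF.
rewrite e -sq => h.
have : 0 < t * s ^+ 2 by rewrite mulr_gt0 // exprn_gt0.
have : 0 <= t * (t * p) by apply: mulr_ge0; [exact: ltW | apply: mulr_ge0 => //; exact: ltW].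
nra.
Qed.
End Aux.

Theorem mainTheorem2 (R : realType) (N : nat)
  (g : 'cV[R]_N -> \bar R) (f : 'cV[R]_N -> R) (gradf : 'cV[R]_N -> 'cV[R]_N)
  (H : 'M[R]_N) (b : 'cV[R]_N) (c : R)
  (xk d : 'cV[R]_N) (T : 'M[R]_N) :
  proper_fun g -> lsc g ->
  (forall y, is_gradient f y (gradf y)) -> vcontinuous gradf ->
  (exists L : 'M[R]_N, spd L /\
     exists S : 'M[R]_N, spd S /\ S *m S = invmx L /\
       exists gS : 'cV[R]_N -> 'cV[R]_N,
         (forall z, is_gradient (fun z => f (S *m z)) z (gS z)) /\
         (forall z w, norm2 (gS z - gS w) <= norm2 (z - w))) ->
  (exists m : R, forall x, (m%:E <= (f x)%:E + g x)%E) ->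
  spd H ->
  (forall x, f x = 2^-1 * ip x (H *m x) + ip b x + c) ->
  d != 0 ->
  spd T -> spd (T - H) ->
  let M := T - H in
  let Phi := fun (x : 'cV[R]_N) (beta : R) =>
    let y := xk + beta *: d in
    (g x + (f y + ip (gradf y) (x - y) + 2^-1 * sqnormV T (x - y))%:E)%E in
  let betastar := fun x : 'cV[R]_N => ipV M d (x - xk) / ipV M d d in
  let u := (normV M d)^-1 *: (M *m d) in
  let Q := T - u *m u^T in
  let Psi := fun x : 'cV[R]_N =>
    (g x + (2^-1 * sqnormV Q (x - xk + invmx Q *m gradf xk))%:E)%E in
  [/\ Q \in unitmx,
      invmx Q = invmx T + (1 - (u^T *m invmx T *m u) ord0 ord0)^-1 *:
                            (invmx T *m u *m u^T *m invmx T),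
      (forall x beta, (Phi x (betastar x) <= Phi x beta)%E) &
      (forall x, (exists beta, forall x' beta', (Phi x beta <= Phi x' beta')%E)
                 <-> (forall x', (Psi x <= Psi x')%E))].
Proof.
move=> gprop glsc gradH gcont _ _ [Hs Hpd] fE dnz [Ts Tpd] [Ms Mpd].
move=> M Phi betastar u Q Psi.
have Hpsd : forall h, 0 <= ip h (H *m h).
  by move=> h; case: (eqVneq h 0) => [->|/Hpd/ltW //]; rewrite mulmx0 ip0r.
have Mpsd : forall h, 0 <= ip h (M *m h).
  by move=> h; case: (eqVneq h 0) => [->|/Mpd/ltW //]; rewrite mulmx0 ip0r.
have gradE : forall y, gradf y = H *m y + b.
  by move=> y; apply: (grad_quad _ _ _ _ _ _ Hs Hpsd fE).
set C := ip d (M *m d).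
have C0 : 0 < C by apply: Mpd.
set s := normV M d.
have s0 : 0 < s by rewrite /s /normV sqrtr_gt0.
have sq : s ^+ 2 = C by rewrite /s /normV sqr_sqrtr // ltW.
have sinv2 : s^-1 ^+ 2 = C^-1 by rewrite exprVn sq.
have uE : forall z, ip u z = s^-1 * ip d (M *m z).
  by move=> z; rewrite /u ipZl ipMr Ms.
have u11 : forall z, u^T *m z = (ip u z)%:M.
  by move=> z; rewrite [LHS]mx11_scalar.
have QE : forall z, ip z (Q *m z) = ip z (T *m z) - (ip u z) ^+ 2.
  move=> z; rewrite /Q mulmxBl ipBr -mulmxA u11 mul_mx_scalar ipZr.
  by rewrite [ip z u]ipC expr2.
have TE : forall z, ip z (T *m z) = ip z (M *m z) + ip z (H *m z).
  by move=> z; rewrite /M mulmxBl ipBr subrK.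
have CS : forall z, C^-1 * ip d (M *m z) ^+ 2 <= ip z (M *m z).
  move=> z; have := Mpsd (z - (C^-1 * ip d (M *m z)) *: d).
  rewrite quadM // -/C => h.
  have e : ip z (M *m z) - 2 * (C^-1 * ip d (M *m z)) * ip d (M *m z) +
    (C^-1 * ip d (M *m z)) ^+ 2 * C = ip z (M *m z) - C^-1 * ip d (M *m z) ^+ 2.
    by field; rewrite gt_eqF.
  by rewrite e subr_ge0 in h.
have Qs : Q^T = Q by rewrite /Q linearB /= trmx_mul trmxK Ts.
have Qpd : forall z, z != 0 -> 0 < ip z (Q *m z).
  move=> z nz; rewrite QE TE uE exprMn sinv2.
  have := CS z; have := Hpd z nz; lra.
have Qunit : Q \in unitmx by apply: pd_unit.
have Tunit : T \in unitmx by apply: pd_unit.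
have ud : ip u d = s by rewrite uE -/C -sq; field; rewrite gt_eqF.
have unz : u != 0 by apply/negP => /eqP u0; move: ud; rewrite u0 ip0l => s00; rewrite -s00 ltxx in s0.
set w := invmx T *m u.
have wnz : w != 0.
  by apply: contra unz => /eqP w0; rewrite -(mulKVmx Tunit u) -/w w0 mulmx0.
set a := (u^T *m invmx T *m u) ord0 ord0.
have aE : a = ip u w by rewrite /a /ip /w mulmxA.
have Qw : Q *m w = (1 - a) *: u.
  rewrite /Q mulmxBl /w mulKVmx // -mulmxA -/w u11 -aE mul_mx_scalar.
  by rewrite scalerBl scale1r.
have a1 : 1 - a != 0.
  apply/negP => /eqP a0; have := Qpd _ wnz; rewrite Qw a0 scale0r ip0r ltxx //.
have QX : Q *m (invmx T + (1 - a)^-1 *: (invmx T *m u *m u^T *m invmx T)) = 1%:M.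
  rewrite mulmxDr -scalemxAr -/w (mulmxA Q (w *m u^T)) (mulmxA Q w) Qw -(scalemxAl (1 - a) u u^T) -(scalemxAl (1 - a) (u *m u^T)) scalerA mulVf // scale1r.
  by rewrite /Q mulmxBl mulmxV // subrK.
have invQ : invmx Q = invmx T + (1 - a)^-1 *: (invmx T *m u *m u^T *m invmx T).
  by rewrite -[RHS](mulKmx Qunit) QX mulmx1.
have PhiE : forall x beta, Phi x beta = (g x + (f x + 2^-1 *
   (ip (x - xk) (M *m (x - xk)) - 2 * beta * ip d (M *m (x - xk)) + beta ^+ 2 * C))%:E)%E.
  move=> x beta; rewrite -quadM // /Phi /=.
  set y := xk + beta *: d.
  have -> : x - xk - beta *: d = x - y by rewrite /y opprD addrA.
  have := quad_expand _ _ _ _ _ _ Hs fE y (x - y).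
  have -> : y + (x - y) = x by rewrite addrC subrK.
  move=> ->; rewrite gradE /sqnormV /ipV /M mulmxBl ipBr.
  congr (_ + _%:E)%E; rewrite [in RHS]ipBr; by field.
have claim3 : forall x beta, (Phi x (betastar x) <= Phi x beta)%E.
  move=> x beta; rewrite !PhiE; apply: leeD2l; rewrite lee_fin.
  rewrite /betastar /ipV -/C.
  set B := ip d (M *m (x - xk)).
  set t := B / C.
  have Bt : B = t * C by rewrite /t; field; rewrite gt_eqF.
  rewrite Bt; have := mulr_ge0 (ltW C0) (sqr_ge0 (beta - t)); nra.
set v := gradf xk.
set K := f xk - 2^-1 * ip (invmx Q *m v) v.
have key : forall x, Phi x (betastar x) = (Psi x + K%:E)%E.
  move=> x; rewrite PhiE /Psi -addeA -EFinD; congr (_ + _%:E)%E.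
  rewrite /betastar /ipV -/C /sqnormV /ipV.
  set e := x - xk.
  rewrite -/v (mulmxDr Q e) (mulmxA Q (invmx Q) v) mulmxV // mul1mx ipDl !ipDr.
  have h1 : ip (invmx Q *m v) (Q *m e) = ip v e.
    by rewrite ipMr Qs mulmxA mulmxV // mul1mx.
  have fx : f x = f xk + ip v e + 2^-1 * ip e (H *m e).
    have := quad_expand _ _ _ _ _ _ Hs fE xk e.
    have -> : xk + e = x by rewrite /e addrC subrK.
    by rewrite /v gradE.
  rewrite h1 [ip e v]ipC QE TE uE [(s^-1 * _) ^+ 2]exprMn sinv2 fx /K.
  by field; rewrite gt_eqF.
have Kfin : (K%:E : \bar R) \is a fin_num by [].
split => //.
- move=> x; split.
  + move=> [beta hb] x'.
    rewrite -(leeD2rE _ _ Kfin) -!key.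
    exact: le_trans (claim3 x beta) (hb x' (betastar x')).
  + move=> h; exists (betastar x) => x' beta'.
    apply: le_trans (claim3 x' beta').
    by rewrite !key leeD2r // h.
Qed.
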